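(* Let $\Gamma_0$ and $\Sigma_0$ be finite normal circulants and let $n_1,\dots,n_r,m_1,\dots,m_s$ be integers greater than $3$ such that $|V(\Gamma_0)|,n_1,\dots,n_r$ are pairwise coprime, $|V(\Sigma_0)|,m_1,\dots,m_s$ are pairwise coprime, and $\mathrm{Aut}(\Gamma_0)\times\mathrm{S}_{n_1}\times\dots\times\mathrm{S}_{n_r}\cong\mathrm{Aut}(\Sigma_0)\times\mathrm{S}_{m_1}\times\dots\times\mathrm{S}_{m_s}$ as abstract groups. Then $r=s$ and $\{n_1,\dots,n_r\}=\{m_1,\dots,m_s\}$.
   Context: A digraph is a pair $(V,A)$ with $A\subseteq V\times V$, with vertex set $V(\Gamma)=V$. It is a normal circulant if $\mathrm{Aut}(\Gamma)$ has a finite cyclic subgroup that is regular on $V$ and normal in $\mathrm{Aut}(\Gamma)$. $\mathrm{S}_n$ is the symmetric group of degree $n$. *)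

(* Defs.v *)
From HB Require Import structures.
From mathcomp Require Import all_boot all_fingroup all_solvable.
Set Implicit Arguments. Unset Strict Implicit. Unset Printing Implicit Defensive.
Local Open Scope group_scope.

(* A (finite) digraph on the vertex set V is an arc relation A : rel V,
   i.e. A x y <-> (x,y) is an arc. *)

Definition Aut (V : finType) (A : rel V) : {set {perm V}} :=
  [set g : {perm V} | [forall x, forall y, A (g x) (g y) == A x y]].

Lemma Aut_group_set (V : finType) (A : rel V) : group_set (Aut A).
Proof.
apply/group_setP; split.
  by rewrite inE; apply/forallP=> x; apply/forallP=> y; rewrite !perm1.
move=> g h; rewrite !inE => /forallP Hg /forallP Hh.
apply/forallP=> x; apply/forallP=> y; rewrite !permM.
by rewrite (eqP (forallP (Hh (g x)) (g y))) (eqP (forallP (Hg x) y)).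
Qed.
Canonical Aut_group (V : finType) (A : rel V) := Group (Aut_group_set A).

Definition regular (V : finType) (C : {set {perm V}}) : Prop :=
  [transitive C, on [set: V] | 'P] /\ forall x : V, 'C_C[x | 'P] = 1.

Definition normal_circulant (V : finType) (A : rel V) : Prop :=
  exists C : {group {perm V}},
    [/\ C \subset Aut A, cyclic C, regular C & C <| Aut A].

Definition Sym_family (ns : seq nat) (i : 'I_(size ns)) : finGroupType :=
  {perm 'I_(nth 0 ns i)}.

Definition AutxSyms (V : finType) (A : rel V) (ns : seq nat)
  : {set ({perm V} * {dffun forall i : 'I_(size ns), @Sym_family ns i})%type} :=
  setX (Aut A) [set: {dffun forall i : 'I_(size ns), @Sym_family ns i}].

(* Main.v *)
Require Import Defs.
From mathcomp Require Import all_boot all_fingroup all_solvable.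
Set Implicit Arguments. Unset Strict Implicit. Unset Printing Implicit Defensive.

Section Part1.
Local Open Scope group_scope.

Lemma trans_cent_sub (V : finType) (C K : {group {perm V}}) :
  abelian C -> [transitive C, on [set: V] | 'P] -> K \subset 'C(C) -> K \subset C.
Proof.
move=> cC trC sKC; apply/subsetP=> k Kk.
have kC : k \in 'C(C) := subsetP sKC k Kk.
case: (pickP (@predT V)) => [x _|V0]; last first.
  suff ->: k = 1 by rewrite group1.
  by apply/permP=> y; have := V0 y.
have orbT y : y \in orbit 'P C x by rewrite (atransP trC) ?inE.
have /orbitP[c Cc cx] := orbT (k x).
rewrite /= in cx.
set g := k * c^-1.
have gC : g \in 'C(C) by rewrite groupM ?groupV // (subsetP (cC)).
have gx : g x = x by rewrite permM -cx -permM mulgV perm1.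
have g1 : g = 1.
  apply/permP=> y; have /orbitP[d Cd <-] := orbT y; rewrite /= perm1.
  have cgd : commute g d by apply: (centP gC).
  by rewrite -permM -cgd permM gx.
have -> : k = c by rewrite -(mulgKV c k) -/g g1 mul1g.
exact: Cc.
Qed.

Lemma Aut_metabelian (V : finType) (A : rel V) :
  normal_circulant A -> (Defs.Aut A)^`(2) = 1.
Proof.
case=> C [sCG cycC [trC _] nCG].
have cC : abelian C := cyclic_abelian cycC.
have nCG' : Defs.Aut A \subset 'N(C) := normal_norm nCG.
have sG'N : (Defs.Aut A)^`(1) \subset 'N(C) := subset_trans (der_sub 1 _) nCG'.
have sG'K : (Defs.Aut A)^`(1) \subset 'C(C).
  rewrite -ker_conj_aut ker_trivg_morphim sG'N /=.
  rewrite morphim_der //.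
  have ab : abelian (conj_aut C @* Defs.Aut A).
    exact: abelianS (Aut_conj_aut _ _) (Aut_cyclic_abelian cycC).
  by rewrite (derG1P ab).
have sG'C := trans_cent_sub cC trC sG'K.
apply/trivgP; change ([~: (Defs.Aut A)^`(1), (Defs.Aut A)^`(1)] \subset [1]).
apply: subset_trans (commgSS sG'C sG'C) _.
by have := derG1P cC; rewrite dergSn => ->.
Qed.
End Part1.

Section Part2.
Local Open Scope group_scope.

Variables (V : finType) (A : rel V) (ns : seq nat).
Local Notation I := 'I_(size ns).
Local Notation Sf := (@Sym_family ns).
Local Notation sT := {dffun forall i : I, Sf i}.

Lemma setT_Xn : [set: sT] = setXn (fun i => [set: Sf i]%G).
Proof. by apply/setP=> x; rewrite !inE; apply/esym/forallP=> i; rewrite inE. Qed.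

Lemma card_der_P n :
  #|[set: sT]^`(n)| = (\prod_(i : I) #|[set: Sf i]^`(n)|)%N.
Proof.
have := setXn_dprod (fun i => [set: Sf i]%G).
rewrite -setT_Xn => /(der_bigdprod n) /bigdprod_card <-.
apply: eq_bigr => i _.
rewrite -morphim_dfung1 -morphim_der ?subsetT // card_injm ?injm_dfung1 ?subsetT //.
Qed.

Lemma card_der_X (M : {group {perm V}}) n : M^`(n) = 1 ->
  #|(setX M [set: sT])^`(n)| = #|[set: sT]^`(n)|.
Proof.
move=> Mn.
have := setX_dprod M [set: sT]%G.
move=> /(der_dprod n) /dprod_card <-.
rewrite -morphim_pairg1 -morphim_der ?subsetT // Mn morphim1 cards1 mul1n.
rewrite -morphim_pair1g -morphim_der ?subsetT // card_injm ?injm_pair1g ?subsetT //.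
Qed.
End Part2.

Section Part3.
Local Open Scope group_scope.

Lemma simple_perfect gT (G : {group gT}) : simple G -> ~~ abelian G -> G^`(1) = G.
Proof.
move=> /simpleP[_ simG] nab; case: (simG _ (der_normal 1 G)) => // H.
by case/negP: nab; apply/derG1P.
Qed.

Lemma perfect_der gT (G : {group gT}) n : G^`(1) = G -> G^`(n) = G.
Proof. by move=> G1; elim: n => // n IH; rewrite dergSn IH. Qed.

Lemma Alt_nab (T : finType) : 4 < #|T| -> ~~ abelian ('Alt_T).
Proof. by move=> h; apply/negP=> /abelian_sol; rewrite solvable_AltF. Qed.

Lemma Sym_der1_Alt (T : finType) : [set: {perm T}]^`(1) \subset 'Alt_T.
Proof.
change (<<commg_set [set: {perm T}] [set: {perm T}]>> \subset 'Alt_T).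
rewrite gen_subG; apply/subsetP=> _ /imset2P[x y _ _ ->].
by rewrite Alt_even /commg /conjg !odd_permM !odd_permV; case: (odd_perm x); case: (odd_perm y).
Qed.

Lemma Sym_der2 (T : finType) : 4 < #|T| -> [set: {perm T}]^`(2) = 'Alt_T.
Proof.
move=> h; apply/eqP; rewrite eqEsubset; apply/andP; split.
  exact: subset_trans (der_subS 1 _) (Sym_der1_Alt T).
rewrite -{1}(perfect_der 2 (simple_perfect (simple_Alt5 h) (Alt_nab h))).
exact: dergS (subsetT _).
Qed.

Lemma card_Alt_I n : 1 < n -> #|'Alt_('I_n)| = n`! %/ 2.
Proof. by move=> h; have := @card_Alt ('I_n); rewrite card_ord => /(_ h) <-; rewrite mulKn. Qed.

Definition o0 : 'I_4 := @Ordinal 4 0 isT.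
Definition o1 : 'I_4 := @Ordinal 4 1 isT.
Definition o2 : 'I_4 := @Ordinal 4 2 isT.
Definition o3 : 'I_4 := @Ordinal 4 3 isT.

Lemma S4_der2 : 1 < #|[set: {perm 'I_4}]^`(2)|.
Proof.
set a := tperm o0 o1; set b := tperm o1 o2; set c := tperm o1 o2; set d := tperm o2 o3.
have u1 : [~ a, b] \in [set: {perm 'I_4}]^`(1) by apply: mem_commg; rewrite inE.
have v1 : [~ c, d] \in [set: {perm 'I_4}]^`(1) by apply: mem_commg; rewrite inE.
have z2 : [~ [~ a, b], [~ c, d]] \in [set: {perm 'I_4}]^`(2) by apply: mem_commg.
rewrite (cardD1 1) group1 ltnS lt0n; apply/existsP; exists [~ [~ a, b], [~ c, d]].
rewrite z2 andbT; apply/eqP=> /eqP/commgP/permP/(_ o0).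
rewrite /commg /conjg !permM.
rewrite /a /b /c /d !tpermV !permE /=.
by move/(congr1 val).
Qed.
Lemma aux_le2 q a m : 0 < a -> (q * a <= m)%N -> (2 * a)%N = m -> q <= 2.
Proof. by move=> a0 h e; rewrite -e leq_pmul2r in h. Qed.

Definition NSinv (gT : finGroupType) (G : {set gT}) (k : nat) : Prop :=
  exists N : {group gT}, [/\ N <| G, simple N, ~~ abelian N, #|N| = k & 24 < k].

Lemma NSinv_isog (gT hT : finGroupType) (G : {group gT}) (H : {group hT}) k :
  G \isog H -> NSinv G k -> NSinv H k.
Proof.
case/isogP=> f injf fG [N [nNG simN nabN cN k24]].
have sNG := normal_sub nNG.
exists (f @* N)%G; split=> //.
- by rewrite -fG; apply: morphim_normal.
- by rewrite -(isog_simple (sub_isog sNG injf)).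
- by rewrite injm_abelian.
- by rewrite card_injm.
Qed.

Lemma der2_isog (gT hT : finGroupType) (G : {group gT}) (H : {group hT}) :
  G \isog H -> #|G^`(2)| = #|H^`(2)|.
Proof.
case/isogP=> f injf <-.
by rewrite -morphim_der // card_injm // (subset_trans (der_sub 2 G)).
Qed.

End Part3.

Section Part4.
Local Open Scope group_scope.

Variables (V : finType) (A : rel V) (ns : seq nat).
Local Notation I := 'I_(size ns).
Local Notation Sf := (@Sym_family ns).
Local Notation sT := {dffun forall i : I, Sf i}.
Local Notation gT := ({perm V} * sT)%type.
Local Notation G := (setX_group (Defs.Aut_group A) [set: sT]%G).

Definition proj i (x : gT) : Sf i := x.2 i.
Lemma proj_morphM i : {morph proj i : x y / x * y}.
Proof. move=> x y; rewrite /proj /=.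
by rewrite mulg_ffun. Qed.
Canonical proj_morphism i := @Morphism _ _ setT (proj i) (in2W (@proj_morphM i)).

Lemma proj_G i : proj i @* G = [set: Sf i].
Proof.
apply/eqP; rewrite eqEsubset subsetT /=; apply/subsetP=> s _.
apply/morphimP; exists (1, dfung1 s); first by rewrite in_setT.
  by rewrite in_setX group1 in_setT.
by rewrite /= /proj /= dfung1_id.
Qed.

Lemma conjg_ffun (f w : sT) j : (f ^ w) j = f j ^ w j.
Proof. by rewrite /conjg !mulg_ffun invg_ffun. Qed.

Lemma mem_NS (i : I) : 4 < nth 0 ns i -> NSinv G #|'Alt_('I_(nth 0 ns i))|.
Proof.
set n := nth 0 ns i => n4.
have cT : 4 < #|'I_n| by rewrite card_ord.
set Al := 'Alt_('I_n).
have iso1 : Al \isog ((@pair1g {perm V} sT) @* (@dfung1 _ Sf i @* Al)).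
  have i1 := sub_isog (subsetT Al) (@injm_dfung1 _ Sf i).
  have i2 := sub_isog (subsetT (@dfung1 _ Sf i @* Al)) (injm_pair1g {perm V} sT).
  exact: isog_trans i1 i2.
exists ((@pair1g {perm V} sT) @* (@dfung1 _ Sf i @* Al))%G; split.
  rewrite /= morphim_pair1g morphim_dfung1.
  have clos z g : z \in setX 1 (set1gXn Al) -> g \in G -> z ^ g \in setX 1 (set1gXn Al).
    case: z => z1 z2; rewrite !inE /= => /andP[/eqP -> /set1gXnP[h Ah ->]] _.
    rewrite /conjg /= mul1g mulVg eqxx /=.
    apply/set1gXnP; exists (h ^ (g.2 i)).
      by rewrite memJ_norm // (subsetP (normal_norm (Alt_normal _))) // inE.
    apply/ffunP=> j; rewrite -/(conjg _ _) conjg_ffun.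
    case: (eqVneq i j) => [<-|ij]; first by rewrite !dfung1_id.
    by rewrite !dfung1_dflt // conj1g.
  apply/normalP; split.
    apply/subsetP=> -[z1 z2]; rewrite in_setX in_set1 => /andP[/eqP -> _].
    by rewrite in_setX group1 in_setT.
  move=> g Gg; apply/eqP; rewrite eqEcard cardJg leqnn andbT.
  apply/subsetP=> y; rewrite mem_conjg => /clos/(_ Gg).
  by rewrite conjgKV.
- by rewrite -(isog_simple iso1) simple_Alt5.
- by rewrite -(isog_abelian iso1) Alt_nab.
- by rewrite -(card_isog iso1).
- rewrite card_Alt_I; last by apply: leq_trans n4.
  apply: leq_trans (_ : 25 <= 5`! %/ 2) _; first by [].
  exact: leq_div2r (leq_fact n4).
Qed.


Lemma NS_mem k : (Defs.Aut A)^`(2) = 1 -> NSinv G k ->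
  exists2 i : I, 4 < nth 0 ns i & k = #|'Alt_('I_(nth 0 ns i))|.
Proof.
move=> Hmet [N [nNG simN nabN cardN k24]].
have perfN : N^`(1) = N := simple_perfect simN nabN.
have sNG := normal_sub nNG.
have /simpleP[ntN simN'] := simN.
have p0N : (@fst_morphism {perm V} sT) @* N = 1.
  have e : (@fst_morphism {perm V} sT) @* N = (@fst_morphism {perm V} sT) @* N^`(2).
    by rewrite (perfect_der 2 perfN).
  apply/eqP; rewrite eqEsubset sub1G andbT e morphim_der ?subsetT //.
  apply: subset_trans (dergS 2 (morphimS _ sNG)) _.
  have fG : (@fst_morphism {perm V} sT) @* G = Defs.Aut A := morphim_fstX _ _.
  by rewrite /= fG Hmet.
have key (i : I) : proj i @* N = 1 \/
    (4 < nth 0 ns i /\ k = #|'Alt_('I_(nth 0 ns i))|).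
  set n := nth 0 ns i.
  have kerN : N :&: 'ker (proj i) <| N := normalGI (subsetT N) (ker_normal _).
  case: (simN' _ kerN) => [kerN1|kerNN]; last first.
    left; apply/trivgP; move: (subsetIr N ('ker (proj i))).
    by rewrite kerNN ker_trivg_morphim => /andP[].
  right.
  set Q := proj i @* N.
  have cQ : #|Q| = k.
    by rewrite /Q card_morphim setTI -indexgI kerN1 indexg1.
  have cS : #|[set: {perm 'I_n}]| = n`! by have := card_Sym ('I_n); rewrite card_ord.
  have n4 : 4 < n.
    rewrite ltnNge; apply/negP=> n4.
    have : #|Q| <= n`! by rewrite -cS; apply: subset_leq_card; apply: subsetT.
    rewrite cQ => /leq_trans/(_ (leq_fact n4)) => k24'.
    by move: (leq_trans k24 k24').
  split=> //.
  set Al := 'Alt_('I_n).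
  set P := proj i @*^-1 Al.
  have nP : [set: gT] \subset 'N(P).
    apply: subset_trans (morphpre_norm _ _).
    have -> : 'N(Al) = [set: {perm 'I_n}].
      by apply/eqP; rewrite eqEsubset subsetT (normal_norm (Alt_normal _)).
    by rewrite morphpreT.
  have nsP : P <| [set: gT] by rewrite /normal subsetT.
  have nH : N :&: P <| N := normalGI (subsetT N) nsP.
  have QS : Q <| [set: {perm 'I_n}].
    by rewrite -(proj_G i); apply: morphim_normal.
  case: (simN' _ nH) => [H1|HN].
    have QA : Q :&: Al = 1 by rewrite -morphim_setIpre H1 morphim1.
    have := mul_cardG Q Al; rewrite QA cards1 muln1.
    have : #|Q * Al| <= n`! by rewrite -cS; apply: subset_leq_card; apply: subsetT.
    have cA : (2 * #|Al|)%N = n`!.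
      by have := @card_Alt ('I_n); rewrite card_ord; apply; apply: leq_trans n4.
    move=> le1 e1.
    have k2 : #|Q| <= 2.
      apply: (@aux_le2 #|Q| #|Al| (n`!)); [exact: cardG_gt0 | | exact: cA].
      by rewrite e1.
    rewrite cQ in k2.
    by move: (leq_trans k24 k2).
  have sQA : Q \subset Al.
    by rewrite /Q sub_morphim_pre ?subsetT // -HN subsetIr.
  have QnA : Q <| Al := normalS sQA (subsetT _) QS.
  have cT : 4 < #|'I_n| by rewrite card_ord.
  have /simpleP[_ simA] := simple_Alt5 cT.
  case: (simA _ QnA) => [Q1|QA]; last first.
    by rewrite -cQ /Q /Al; move: QA => /= ->.
  by move: k24; rewrite -cQ /Q; move: Q1 => /= ->; rewrite cards1.
case: (pickP (fun i : I => (4 < nth 0 ns i) && (k == #|'Alt_('I_(nth 0 ns i))|))).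
  by move=> i /andP[? /eqP ?]; exists i.
move=> none; case/eqP: ntN; apply/trivgP/subsetP=> -[x1 x2] Nx.
have x11 : x1 = 1.
  have := mem_morphim (@fst_morphism {perm V} sT) (in_setT _) Nx.
  by rewrite p0N => /set1P.
apply/set1P; rewrite x11; congr (_, _); apply/ffunP=> i.
rewrite ffunE.
case: (key i) => [pN|[h1 h2]]; last by move: (none i); rewrite h1 h2 eqxx.
have := mem_morphim (proj_morphism i) (in_setT _) Nx.
by rewrite pN => /set1P.
Qed.

End Part4.

Section Part5.
Local Open Scope group_scope.

Lemma fact_half_inj n m : 1 < n -> 1 < m -> n`! %/ 2 = m`! %/ 2 -> n = m.
Proof.
move=> n1 m1 e.
have e' : n`! = m`!.
  by rewrite -(divnK (@dvdn_fact 2 n n1)) -(divnK (@dvdn_fact 2 m m1)) e.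
have n0 : 0 < n by apply: ltnW.
have m0 : 0 < m by apply: ltnW.
apply/eqP; rewrite eqn_leq -(leq_pfact n0 m0) -(leq_pfact m0 n0) e' leqnn.
done.
Qed.

Lemma NS_iff (V : finType) (A : rel V) (ns : seq nat) n :
  (Defs.Aut A)^`(2) = 1 -> 4 < n ->
  (n \in ns) <-> NSinv (setX_group (Defs.Aut_group A)
     [set: {dffun forall i0 : 'I_(size ns), Sym_family i0}]) (n`! %/ 2).
Proof.
move=> met n4; split=> [nin|].
  have lt : index n ns < size ns by rewrite index_mem.
  have := @mem_NS V A ns (Ordinal lt); rewrite /= nth_index // => /(_ n4).
  by rewrite card_Alt_I //; apply: leq_trans n4.
case/(NS_mem met) => i i4; rewrite card_Alt_I; last by apply: leq_trans i4.
move/fact_half_inj => e; rewrite (e _ _); first exact: mem_nth.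
- by apply: leq_trans n4.
- by apply: leq_trans i4.
Qed.

Lemma pc_uniq s : all (fun n => 3 < n) s -> pairwise coprime s -> uniq s.
Proof.
elim: s => //= x s IH /andP[x3 al] /andP[cx ps].
rewrite IH // andbT; apply/negP=> xs.
have := allP cx x xs; rewrite /coprime gcdnn => /eqP x1.
by rewrite x1 in x3.
Qed.

Definition d2 n : nat := locked #|[set: {perm 'I_n}]^`(2)|.

Lemma card_der2_G (V : finType) (A : rel V) (ns : seq nat) :
  (Defs.Aut A)^`(2) = 1 ->
  #|(setX_group (Defs.Aut_group A)
     [set: {dffun forall i0 : 'I_(size ns), Sym_family i0}])^`(2)| =
  (\prod_(n <- ns) d2 n)%N.
Proof.
move=> met; rewrite /= (card_der_X ns met) card_der_P.
rewrite (big_nth 0) big_mkord; apply: eq_bigr => i _.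
by rewrite /d2 -lock.
Qed.

Lemma small_prod s : all (fun n => 3 < n) s -> uniq s ->
  (\prod_(n <- s | ~~ (4 < n)) d2 n)%N = if 4 \in s then d2 4 else 1%N.
Proof.
move=> al us; rewrite -big_filter.
have -> : [seq n <- s | ~~ (4 < n)] = [seq n <- s | n == 4].
  apply: eq_in_filter => n ns; have := allP al n ns.
  by case: (ltngtP n 4).
case h4: (4 \in s); first by rewrite filter_pred1_uniq // big_seq1.
rewrite big1_seq // => n; rewrite mem_filter => /andP[_ /andP[/eqP -> ]].
by rewrite h4.
Qed.

End Part5.

Theorem lemma5p4 (V W : finType) (A : rel V) (B : rel W) (ns ms : seq nat) :
  normal_circulant A -> normal_circulant B ->
  all (fun n => 3 < n) ns -> all (fun m => 3 < m) ms ->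
  pairwise coprime (#|V| :: ns) -> pairwise coprime (#|W| :: ms) ->
  AutxSyms A ns \isog AutxSyms B ms ->
  size ns = size ms /\ ns =i ms.
Proof.
move=> ncA ncB alN alM pcN pcM iso.
have metA := Aut_metabelian ncA.
have metB := Aut_metabelian ncB.
have uN : uniq ns by apply: pc_uniq => //; case/andP: pcN.
have uM : uniq ms by apply: pc_uniq => //; case/andP: pcM.
set GA := setX_group (Defs.Aut_group A)
     [set: {dffun forall i0 : 'I_(size ns), Sym_family i0}].
set GB := setX_group (Defs.Aut_group B)
     [set: {dffun forall i0 : 'I_(size ms), Sym_family i0}].
have isoAB : GA \isog GB := iso.
have isoBA : GB \isog GA by rewrite isog_sym.
have big5 n : 4 < n -> (n \in ns) = (n \in ms).
  move=> n4; apply/idP/idP.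
    by move/(NS_iff ns metA n4)/(NSinv_isog isoAB)/(NS_iff ms metB n4).
  by move/(NS_iff ms metB n4)/(NSinv_isog isoBA)/(NS_iff ns metA n4).
have eq2 := der2_isog isoAB.
rewrite !card_der2_G // in eq2.
rewrite (bigID (fun n => 4 < n)) [in RHS](bigID (fun n => 4 < n)) /= in eq2.
rewrite !small_prod // in eq2.
have eqbig : (\prod_(n <- ns | 4 < n) d2 n = \prod_(n <- ms | 4 < n) d2 n)%N.
  have pe : perm_eq [seq n <- ns | 4 < n] [seq n <- ms | 4 < n].
    apply: uniq_perm; [exact: filter_uniq | exact: filter_uniq |].
    by move=> n; rewrite !mem_filter; case n4: (4 < n) => /=; [rewrite big5 |].
  by rewrite -[LHS]big_filter -[RHS]big_filter (perm_big _ pe).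
have pos : (0 < \prod_(n <- ms | 4 < n) d2 n)%N.
  by apply/prodn_gt0 => n; rewrite /d2 -lock cardG_gt0.
rewrite eqbig in eq2; move/eqP: eq2; rewrite eqn_pmul2l // => /eqP eq4.
have d4 : (1 < d2 4)%N by rewrite /d2 -lock; exact: S4_der2.
have e4 : (4 \in ns) = (4 \in ms).
  move: eq4 d4; case: (4 \in ns); case: (4 \in ms) => //= e.
    by rewrite e.
  by rewrite -e.
have eqm : ns =i ms.
  move=> n; case: (ltngtP 4 n) => [h|h|<-] //; first exact: big5.
  apply/idP/idP.
    by move/(allP alN); rewrite ltnNge -ltnS h.
  by move/(allP alM); rewrite ltnNge -ltnS h.
by split=> //; apply: perm_size; apply: uniq_perm.
Qed.
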